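(* Let $s_1\in\mathbb{Q}$ with $0<s_1<1$, $u_1=\frac{1-s_1^2}{2s_1}$, let $m\in\mathbb{Q}$ with $0<m<\sqrt2-1$, and let $\alpha\in(0,\pi/4)$ be the angle with $\cos\alpha=\frac{1-m^2}{1+m^2}$, $\sin\alpha=\frac{2m}{1+m^2}$. Define $$s_2=2u_1\cot(2\alpha),\qquad s_3=\frac{\cos\alpha-\sin\alpha}{s_2},\qquad s_4=\frac{s_2}{\cos\alpha+\sin\alpha}.$$ Then $s_3\neq s_4$. (Equivalently, in the family of rational leaning boxes of Theorem 1 the two diagonals $c_1,c_2$ of the parallelogram face are never equal, so this family contains no perfect cuboid.)
   Context: In the family of Theorem 1 one sets $u_k=\frac{1-s_k^2}{2s_k}$, and the parallelogram face of the leaning box has diagonals proportional to $u_3$ and $u_4$; $s_3=s_4$ is equivalent to $u_3=u_4$, i.e. to that face being a rectangle. *)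

(* Defs.v *)
From Stdlib Require Export Reals QArith Qreals.
Open Scope R_scope.

Definition u_of (s : R) : R := (1 - s ^ 2) / (2 * s).

Definition cot (x : R) : R := cos x / sin x.

(* Main.v *)
Require Import Defs.
From Stdlib Require Import Reals QArith Qreals ZArith Lia Lra Psatz.
From mathcomp Require Import all_boot zify.

Module NT.
Local Open Scope nat_scope.
Ltac cl := repeat match goal with
  | H : is_true (coprime _ _) |- _ => clear H
  | H : is_true (odd _) |- _ => clear H
  | H : is_true (~~ odd _) |- _ => clear H
  | H : is_true (_ %| _) |- _ => clear H
  | H : is_true (_ == _) |- _ => clear H
  end.

Lemma cop_of (p q : nat) : (forall d, d %| p -> d %| q -> d %| 1) -> coprime p q.
Proof. by move=> H; rewrite /coprime -dvdn1; apply: H; [apply: dvdn_gcdl|apply: dvdn_gcdr]. Qed.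

Lemma cop_use (p q d : nat) : coprime p q -> d %| p -> d %| q -> d %| 1.
Proof. by move=> /eqP <- hp hq; rewrite dvdn_gcd hp hq. Qed.

Lemma sq_cop (a b c : nat) : coprime a b -> a * b = c * c -> exists d, a = d * d.
Proof.
move=> cab e; exists (gcdn a c); set g := gcdn a c.
apply/eqP; rewrite eqn_dvd; apply/andP; split.
- rewrite /g muln_gcdl dvdn_gcd; apply/andP; split; first exact: dvdn_mulr.
  by rewrite muln_gcdr dvdn_gcd -e dvdn_mull ?dvdn_mulr.
- have gb : coprime (g * g) b.
    by rewrite coprimeMl; have h := coprime_dvdl (dvdn_gcdl a c) cab; rewrite h.
  rewrite -(Gauss_dvdl _ gb) e; apply: dvdn_mul; exact: dvdn_gcdr.
Qed.

Lemma sq_inj (r s : nat) : r * r = s * s -> r = s.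
Proof. move=> e; case: (ltngtP r s) => h //; (cl; nia). Qed.

Lemma even_half (n : nat) : ~~ odd n -> n = 2 * n./2.
Proof. move=> h; have := odd_double_half n; rewrite (negbTE h) add0n mul2n. by move=> ->. Qed.

Lemma pyth (a b c : nat) : coprime a b -> a * a + b * b = c * c -> ~~ odd b -> 0 < b ->
  exists m n, [/\ a = m * m - n * n, b = 2 * (m * n), c = m * m + n * n, coprime m n & n <= m].
Proof.
move=> cab e eb b0.
have oa : odd a.
  case: (boolP (odd a)) => // ea; have := cop_use _ _ 2 cab; by rewrite !dvdn2 ea eb => /(_ isT isT).
have oc : odd c by move: (oddM c c); rewrite andbb -e oddD !oddM oa (negbTE eb) => <-.
have ac : a < c by (cl; nia).
have cac : coprime a c.
  rewrite -(coprime_pexpr a c (isT : 0 < 2)). rewrite (expnS c 1) expn1 -e /coprime gcdnMDl.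
  by rewrite -/(coprime a (b * b)) coprimeMr cab.
have [P eP] : exists P, c + a = 2 * P.
  by exists (c + a)./2; apply: even_half; rewrite oddD oc oa.
have [Q eQ] : exists Q, c - a = 2 * Q.
  by exists (c - a)./2; apply: even_half; rewrite oddB ?oc ?oa // ltnW.
have [R eR] : exists R, b = 2 * R by exists b./2; apply: even_half.
have ePQ : P * Q = R * R by (cl; nia).
have cPQ : coprime P Q.
  apply: cop_of => d dP dQ; apply: (cop_use _ _ _ cac).
  - have -> : a = P - Q by (cl; lia). exact: dvdn_sub.
  - have -> : c = P + Q by (cl; lia). exact: dvdn_add.
have [m hm] := sq_cop _ _ _ cPQ ePQ.
have [n hn] : exists n, Q = n * n by apply: (sq_cop Q P R); [rewrite coprime_sym | rewrite mulnC].
exists m, n; split.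
- rewrite -hm -hn; (cl; lia).
- have : R = m * n by apply: sq_inj; rewrite -ePQ hm hn; (cl; nia).
  (cl; lia).
- rewrite -hm -hn; (cl; lia).
- by move: cPQ; rewrite hm hn coprimeMl coprimeMr => /andP[/andP[]].
- rewrite leqNgt; apply/negP => h; have : m * m < n * n by apply: ltn_mul.
  rewrite -hm -hn; (cl; lia).
Qed.

Lemma sq_mod4 (n : nat) : n * n %% 4 = odd n.
Proof.
have := odd_double_half n; case: (odd n) => /= h.
- have -> : n * n = (n./2 * n./2 + n./2) * 4 + 1 by rewrite -h -muln2; (cl; nia).
  by rewrite modnMDl.
- have -> : n * n = (n./2 * n./2) * 4 by rewrite -h -muln2; (cl; nia).
  by rewrite modnMl.
Qed.

Lemma key (a b y : nat) : coprime a b -> 0 < b -> b * b < a * a ->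
  y * y = 4 * (a * (b * (a * a - b * b))) ->
  exists c d e, [/\ c < a * a + b * b, 0 < d, 0 < e & c * c * c * c = d * d * d * d + e * e].
Proof.
move=> cab b0 ba ey.
set M := a * a - b * b.
have ey2 : ~~ odd y.
  apply/negP => oy; have : odd (y * y) by rewrite oddM oy.
  by rewrite ey oddM.
have [w ew] : exists w, y = 2 * w by exists y./2; apply: even_half.
have ew2 : w * w = a * (b * M) by (cl; nia).
have cab2 : coprime a (b * b) by rewrite coprimeMr cab.
have cba2 : coprime b (a * a) by rewrite coprimeMr coprime_sym cab.
have caM : coprime a M.
  apply: cop_of => d da dM; apply: (cop_use _ _ _ cab2) => //.
  have -> : b * b = a * a - M by rewrite /M; (cl; lia).
  by apply: dvdn_sub => //; apply: dvdn_mulr.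
have cbM : coprime b M.
  apply: cop_of => d db dM; apply: (cop_use _ _ _ cba2) => //.
  have -> : a * a = M + b * b by rewrite /M; (cl; lia).
  by apply: dvdn_add => //; apply: dvdn_mulr.
have [c hc] : exists c, a = c * c.
  by apply: (sq_cop _ (b * M) w); [rewrite coprimeMr cab caM | rewrite ew2].
have [d hd] : exists d, b = d * d.
  by apply: (sq_cop _ (a * M) w); [rewrite coprimeMr coprime_sym cab cbM | rewrite ew2; (cl; nia)].
have [e he] : exists e, M = e * e.
  apply: (sq_cop _ (a * b) w); last by rewrite ew2; (cl; nia).
  by rewrite coprimeMr (coprime_sym M a) (coprime_sym M b) caM cbM.
have M0 : 0 < M by rewrite /M; (cl; lia).
exists c, d, e; split.
- have a0 : 0 < a by (cl; nia).
  have c0 : 0 < c by (cl; nia).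
  (cl; nia).
- (cl; nia).
- (cl; nia).
- have : a * a = b * b + M by rewrite /M; (cl; lia).
  rewrite hc hd he; (cl; nia).
Qed.


Lemma nofermat (x y z : nat) : 0 < y -> 0 < z -> x * x * x * x = y * y * y * y + z * z -> False.
Proof.
elim: x {-2}x (leqnn x) y z => [|N IH] x hx y z y0 z0 e.
  have x0 : x = 0 by (cl; lia).
  rewrite x0 in e; (cl; nia).
have x0 : 0 < x by case: (posnP x) => // x0; rewrite x0 in e; (cl; nia).
set g := gcdn x y.
have g0 : 0 < g by rewrite gcdn_gt0 x0.
case: (eqVneq g 1) => cg; last first.
  have g1 : 1 < g by (cl; lia).
  have [x' ex] : exists x', x = x' * g by exists (x %/ g); rewrite divnK // dvdn_gcdl.
  have [y' ey] : exists y', y = y' * g by exists (y %/ g); rewrite divnK // dvdn_gcdr.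
  have gz : g * g %| z.
    rewrite -(dvdn_pexp2r _ _ (isT : 0 < 2)) !(expnS _ 1) !expn1.
    have -> : z * z = x * x * x * x - y * y * y * y by (cl; lia).
    by rewrite ex ey; apply: dvdn_sub; apply/dvdnP; [exists (x' * x' * x' * x')|exists (y' * y' * y' * y')]; (cl; nia).
  have [z' ez] : exists z', z = z' * (g * g) by exists (z %/ (g * g)); rewrite divnK.
  have g4 : 0 < g * g * g * g by rewrite !muln_gt0 g0.
  have e' : x' * x' * x' * x' = y' * y' * y' * y' + z' * z'.
    apply/eqP; rewrite -(eqn_pmul2l g4); apply/eqP.
    move: e; rewrite ex ey ez => e; (cl; nia).
  apply: (IH x' _ y' z'); [ |(cl; nia)|(cl; nia)|exact: e'].
  have : x' * 1 < x' * g by rewrite ltn_pmul2l //; (cl; nia).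
  (cl; lia).
have cyz : coprime (y * y) z.
  have cyx : coprime (y * y * y * y) (x * x * x * x).
    by rewrite !coprimeMl !coprimeMr coprime_sym /coprime -/g cg.
  apply: cop_of => d dY dz; apply: (cop_use _ _ _ cyx).
    by rewrite -mulnA; apply: dvdn_mulr.
  by rewrite e; apply: dvdn_add; [rewrite -mulnA; apply: dvdn_mulr|apply: dvdn_mulr].
have eY : (y * y) * (y * y) + z * z = (x * x) * (x * x) by (cl; nia).
have Y0 : 0 < y * y by (cl; nia).
case: (boolP (odd y)) => oy.
- have ez : ~~ odd z.
    apply/negP=> oz; have := congr1 (modn^~ 4) eY.
    rewrite -modnDm !sq_mod4 !oddM oy oz /=.
    by case: (odd x).
  have [m [n [hY hz hX cmn nm]]] := pyth _ _ _ cyz eY ez z0.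
  have n0 : 0 < n by (cl; nia).
  have mx : m < x by (cl; nia).
  have nm2 : n * n <= m * m by apply: leq_mul.
  apply: (IH m _ n (x * y)); [(cl; lia)|exact: n0|(cl; nia)|].
  have : x * x * (y * y) = (m * m + n * n) * (m * m - n * n) by rewrite -hY -hX.
  have : m * m - n * n + n * n = m * m by (cl; lia).
  (cl; nia).
- have ez : odd z.
    case: (boolP (odd z)) => // oz; have := cop_use _ _ 2 cyz.
    by rewrite !dvdn2 oddM (negbTE oy) oz => /(_ isT isT).
  have eY' : z * z + (y * y) * (y * y) = (x * x) * (x * x) by (cl; lia).
  have eYY : ~~ odd (y * y) by rewrite oddM (negbTE oy).
  have czY : coprime z (y * y) by rewrite coprime_sym.
  have [m [n [hz hY hX cmn nm]]] := pyth _ _ _ czY eY' eYY Y0.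
  have mn0 : 0 < m * n by (cl; nia).
  have emn : ~~ odd (m * n).
    apply/negP => omn; have [w ew] : exists w, y = 2 * w by exists y./2; apply: even_half.
    have : m * n = 2 * (w * w) by (cl; nia).
    by move=> h; move: omn; rewrite h oddM.
  have fin : forall a b, coprime a b -> 0 < b -> b * b < a * a -> x = a * a + b * b ->
      y * y = 4 * (a * (b * (a * a - b * b))) -> False.
    move=> a b cab b0 ba hx' hy.
    have [c [d [e' [hc hd he hcde]]]] := key _ _ _ cab b0 ba hy.
    apply: (IH c _ d e' hd he hcde); (cl; lia).
  case: (boolP (odd n)) => on.
  + have em : ~~ odd m by move: emn; rewrite oddM on andbT.
    have cnm : coprime n m by rewrite coprime_sym.
    have eX : n * n + m * m = x * x by rewrite hX addnC.
    have m0 : 0 < m by (cl; nia).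
    have [a [b [ha hb hx' cab ba]]] := pyth _ _ _ cnm eX em m0.
    apply: (fin a b cab); [(cl; nia)|(cl; nia)|exact: hx'|].
    rewrite hY hb ha; (cl; nia).
  + have m0 : 0 < n by (cl; nia).
    have [a [b [ha hb hx' cab ba]]] := pyth _ _ _ cmn (esym hX) on m0.
    apply: (fin a b cab); [(cl; nia)|(cl; nia)|exact: hx'|].
    rewrite hY hb ha; (cl; nia).
Qed.

End NT.
Import NT.

Lemma nofermatZ (X Y Z0 : Z) : (0 < Y)%Z -> (0 < Z0)%Z -> (0 <= X)%Z ->
  (X*X*X*X = Y*Y*Y*Y + Z0*Z0)%Z -> False.
Proof.
move=> hY hZ hX e.
have [x ex] : exists x, X = Z.of_nat x by exists (Z.to_nat X); lia.
have [y ey] : exists y, Y = Z.of_nat y by exists (Z.to_nat Y); lia.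
have [z ez] : exists z, Z0 = Z.of_nat z by exists (Z.to_nat Z0); lia.
subst X Y Z0.
apply: (nofermat x y z); try lia.
Qed.

Open Scope R_scope.
Lemma alg (A B E F : R) : B <> 0 -> E <> 0 -> F <> 0 ->
  (2 * (2 * (A / B) / (1 + (A / B) ^ 2)) * ((1 - (A / B) ^ 2) / (1 + (A / B) ^ 2))) *
  (2 * (2 * (A / B) / (1 + (A / B) ^ 2)) * ((1 - (A / B) ^ 2) / (1 + (A / B) ^ 2))) =
  4 * ((1 - (E / F) ^ 2) / (2 * (E / F))) * ((1 - (E / F) ^ 2) / (2 * (E / F))) *
  ((1 - (A / B) ^ 2) / (1 + (A / B) ^ 2) * ((1 - (A / B) ^ 2) / (1 + (A / B) ^ 2)) -
   2 * (A / B) / (1 + (A / B) ^ 2) * (2 * (A / B) / (1 + (A / B) ^ 2))) ->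
  let K := 4 * A * B * (B * B - A * A) in
  let L := (A * A + B * B) * (A * A + B * B) in
  let Fq := F * F - E * E in
  let Eq := E * F in
  (L * Fq) * (L * Fq) * (L * Fq) * (L * Fq) =
  (K * Eq) * (K * Eq) * (K * Eq) * (K * Eq) + (K * L * Fq * Fq) * (K * L * Fq * Fq).
Proof.
intros hB hE hF X K L Fq Eq.
assert (hM : 1 + (A / B) ^ 2 <> 0) by (assert (0 <= (A/B)^2) by (apply pow2_ge_0); lra).
assert (hAB : A * A + B * B <> 0) by nra.
set (K2 := (B * B - A * A) * (B * B - A * A) - 4 * A * A * B * B).
set (P := -(Eq * Eq * L * L * (Fq * Fq * K2 * L + K * K * Eq * Eq))).
apply Rminus_diag_uniq.
transitivity (P * (
  (2 * (2 * (A / B) / (1 + (A / B) ^ 2)) * ((1 - (A / B) ^ 2) / (1 + (A / B) ^ 2))) *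
  (2 * (2 * (A / B) / (1 + (A / B) ^ 2)) * ((1 - (A / B) ^ 2) / (1 + (A / B) ^ 2))) -
  4 * ((1 - (E / F) ^ 2) / (2 * (E / F))) * ((1 - (E / F) ^ 2) / (2 * (E / F))) *
  ((1 - (A / B) ^ 2) / (1 + (A / B) ^ 2) * ((1 - (A / B) ^ 2) / (1 + (A / B) ^ 2)) -
   2 * (A / B) / (1 + (A / B) ^ 2) * (2 * (A / B) / (1 + (A / B) ^ 2))))).
- unfold P, K2, K, L, Fq, Eq. field. split; [exact hB|split; [nra|split; assumption]].
- rewrite X. ring.
Qed.

Theorem theorem2 (s1 m : Q) (alpha : R)
  (hs1 : 0 < Q2R s1 < 1)
  (hm : 0 < Q2R m < sqrt 2 - 1)
  (halpha : 0 < alpha < PI / 4)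
  (hcos : cos alpha = (1 - Q2R m ^ 2) / (1 + Q2R m ^ 2))
  (hsin : sin alpha = 2 * Q2R m / (1 + Q2R m ^ 2)) :
  let u1 := u_of (Q2R s1) in
  let s2 := 2 * u1 * cot (2 * alpha) in
  let s3 := (cos alpha - sin alpha) / s2 in
  let s4 := s2 / (cos alpha + sin alpha) in
  s3 <> s4.
Proof.
intros u1 s2 s3 s4 H.
unfold s3, s4 in H.
assert (Hpi := PI_RGT_0).
assert (hc : 0 < cos alpha) by (apply cos_gt_0; lra).
assert (hs : 0 < sin alpha) by (apply sin_gt_0; lra).
assert (hC : 0 < cos (2 * alpha)) by (apply cos_gt_0; lra).
assert (hS : 0 < sin (2 * alpha)) by (apply sin_gt_0; lra).
assert (hu : 0 < u1).
{ unfold u1, u_of. apply Rdiv_lt_0_compat; nra. }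
assert (Hs2 : s2 = 2 * u1 * (cos (2 * alpha) / sin (2 * alpha))) by reflexivity.
assert (Hu1 : u1 = u_of (Q2R s1)) by reflexivity.
clearbody s2. clearbody u1.
assert (hs2 : 0 < s2).
{ rewrite Hs2. apply Rmult_lt_0_compat; [lra|]. apply Rdiv_lt_0_compat; lra. }
assert (E1 : (cos alpha - sin alpha) * (cos alpha + sin alpha) = s2 * s2).
{ replace ((cos alpha - sin alpha) * (cos alpha + sin alpha)) with
    ((cos alpha - sin alpha) / s2 * (s2 * (cos alpha + sin alpha))) by (field; lra).
  rewrite H. field. lra. }
rewrite Hs2 in E1.
assert (E2 : sin (2 * alpha) * sin (2 * alpha) = 4 * u1 * u1 * cos (2 * alpha)).
{ assert (Cc : cos (2 * alpha) = (cos alpha - sin alpha) * (cos alpha + sin alpha))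
    by (rewrite cos_2a; ring).
  rewrite <- Cc in E1.
  apply (Rmult_eq_reg_l (cos (2 * alpha))); [|lra].
  replace (cos (2 * alpha) * (sin (2 * alpha) * sin (2 * alpha))) with
    (cos (2 * alpha) * (sin (2 * alpha) * sin (2 * alpha))) by reflexivity.
  rewrite {1}E1. field. lra. }
rewrite sin_2a cos_2a hsin hcos Hu1 in E2. unfold u_of in E2.
destruct m as [a bp]. destruct s1 as [e fp].
assert (QM : Q2R (a # bp) = IZR a / IZR (Z.pos bp)) by reflexivity.
assert (QS : Q2R (e # fp) = IZR e / IZR (Z.pos fp)) by reflexivity.
remember (Z.pos bp) as b eqn:Eb. remember (Z.pos fp) as f eqn:Ef.
rewrite QM in hm. rewrite QS in hs1.
rewrite QM QS in E2.
assert (hb : (0 < b)%Z) by (rewrite Eb; lia).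
assert (hf : (0 < f)%Z) by (rewrite Ef; lia).
assert (hbR : 0 < IZR b) by (apply IZR_lt; exact hb).
assert (hfR : 0 < IZR f) by (apply IZR_lt; exact hf).
assert (sq2 : sqrt 2 < 2).
{ assert (h2 := sqrt_sqrt 2). assert (h0 := sqrt_pos 2). nra. }
assert (haR : 0 < IZR a).
{ destruct hm as [hm1 _]. replace (IZR a) with (IZR a / IZR b * IZR b) by (field; lra). nra. }
assert (habR : IZR a < IZR b).
{ destruct hm as [_ hm2]. replace (IZR a) with (IZR a / IZR b * IZR b) by (field; lra). nra. }
assert (heR : 0 < IZR e).
{ destruct hs1 as [h1 _]. replace (IZR e) with (IZR e / IZR f * IZR f) by (field; lra). nra. }
assert (hefR : IZR e < IZR f).
{ destruct hs1 as [_ h2]. replace (IZR e) with (IZR e / IZR f * IZR f) by (field; lra). nra. }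
apply alg in E2; [|lra|lra|lra].
apply lt_IZR in haR. apply lt_IZR in habR. apply lt_IZR in heR. apply lt_IZR in hefR.
apply (nofermatZ
  (((a * a + b * b) * (a * a + b * b)) * (f * f - e * e))
  ((4 * a * b * (b * b - a * a)) * (e * f))
  ((4 * a * b * (b * b - a * a)) * ((a * a + b * b) * (a * a + b * b)) * (f * f - e * e) * (f * f - e * e))).
- assert (0 < b * b - a * a)%Z by nia.
  repeat apply Z.mul_pos_pos; lia.
- assert (0 < b * b - a * a)%Z by nia.
  assert (0 < f * f - e * e)%Z by nia.
  assert (0 < a * a + b * b)%Z by nia.
  repeat apply Z.mul_pos_pos; lia.
- assert (0 <= f * f - e * e)%Z by nia.
  assert (0 <= a * a + b * b)%Z by nia.
  repeat apply Z.mul_nonneg_nonneg; lia.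
- apply eq_IZR. repeat (rewrite minus_IZR || rewrite mult_IZR || rewrite plus_IZR). exact E2.
Qed.
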